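(* Let $R$ be a commutative $*$-ring with unity and $a,b\in R$. If $a\leq b$ in the natural partial order, then $a\underset{*}{\leqslant} b$, i.e. $a^*a=a^*b$ and $aa^*=ba^*$.
   Context: The natural partial order: $a\leq b$ iff there is $x\in R$ with $a=xa=xb=ax^*=bx^*$. The $*$-order (Drazin): $a\underset{*}{\leqslant} b$ iff $a^*a=a^*b$ and $aa^*=ba^*$. *)

(* Defs.v *)
From HB Require Import structures.
From mathcomp Require Import all_boot all_order all_algebra.
Set Implicit Arguments. Unset Strict Implicit. Unset Printing Implicit Defensive.
Import GRing.Theory.
Local Open Scope ring_scope.

Definition is_involution (R : pzRingType) (star : R -> R) : Prop :=
  [/\ forall x y, star (x + y) = star x + star y,
      forall x y, star (x * y) = star y * star x
    & forall x, star (star x) = x].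

Definition nat_le (R : pzRingType) (star : R -> R) (a b : R) : Prop :=
  exists x : R, [/\ a = x * a, a = x * b, a = a * star x & a = b * star x].

Definition star_le (R : pzRingType) (star : R -> R) (a b : R) : Prop :=
  star a * a = star a * b /\ a * star a = b * star a.

(* Main.v *)
Require Import Defs.
From mathcomp Require Import all_boot all_order all_algebra.
Local Open Scope ring_scope.

Theorem mainTheorem3 (R : comPzRingType) (star : R -> R)
  (Hstar : is_involution star) (a b : R) :
  nat_le star a b -> star_le star a b.
Proof.
case: Hstar => _ Hm Hi [x [h1 h2 h3 h4]].
have e1 : star a = x * star a.
  rewrite {1}(_ : a = a * star x) //.
  by rewrite Hm Hi.
have e2 : star a = star x * star a.
  rewrite {1}(_ : a = x * a) //.
  by rewrite Hm GRing.mulrC.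
split.
  by rewrite {2}e1 (GRing.mulrC x) -GRing.mulrA -h2.
by rewrite {2}e2 GRing.mulrA -h4.
Qed.
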